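(* Let $\gamma=(\gamma_1,\dots,\gamma_d)\in\mathbb R^d$ and $\mathbf n\in\mathbb N_0^d$ with $n_i\ge1$ for $1\le i\le d$. Then $$P_{\mathbf n}^{(\gamma,-1)}(x)=(1-|x|)\sum_{i=1}^d\frac{n_i(\gamma_i+n_i)}{|\mathbf n|}P_{\mathbf n-e_i}^{(\gamma,1)}(x).$$
   Context: $|x|=x_1+\dots+x_d$, $|\mathbf n|=n_1+\dots+n_d$, $e_i$ the standard basis of $\mathbb R^d$. For $\boldsymbol\gamma=(\gamma_1,\dots,\gamma_{d+1})\in\mathbb R^{d+1}$ and $\mathbf n\in\mathbb N_0^d$, the Rodrigues function on the interior of the simplex $T^d=\{x_i\ge0,|x|\le1\}$ is $P_{\mathbf n}^{\boldsymbol\gamma}(x)=x_1^{-\gamma_1}\cdots x_d^{-\gamma_d}(1-|x|)^{-\gamma_{d+1}}\frac{\partial^{|\mathbf n|}}{\partial x_1^{n_1}\cdots\partial x_d^{n_d}}\big[x_1^{\gamma_1+n_1}\cdots x_d^{\gamma_d+n_d}(1-|x|)^{\gamma_{d+1}+|\mathbf n|}\big]$; $(\gamma,c)$ denotes $(\gamma_1,\dots,\gamma_d,c)$. *)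

(* Defs.v *)
From Stdlib Require Import Reals Lra Lia.
From Coquelicot Require Import Coquelicot.
Open Scope R_scope.

(* Points of R^d are represented as x : nat -> R, only x 0, ..., x (d-1) matter
   (coordinate i here corresponds to x_{i+1} in the paper).
   Multi-indices are n : nat -> nat likewise. *)

Fixpoint sumR (d : nat) (f : nat -> R) : R :=
  match d with O => 0 | S d' => sumR d' f + f d' end.
Fixpoint prodR (d : nat) (f : nat -> R) : R :=
  match d with O => 1 | S d' => prodR d' f * f d' end.

Definition absx (d : nat) (x : nat -> R) : R := sumR d x.
Definition absn (d : nat) (n : nat -> nat) : R := sumR d (fun i => INR (n i)).

Definition in_simplex_interior (d : nat) (x : nat -> R) : Prop :=
  (forall i, (i < d)%nat -> 0 < x i) /\ absx d x < 1.

Definition upd (x : nat -> R) (i : nat) (t : R) : nat -> R :=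
  fun j => if Nat.eqb j i then t else x j.

Definition partial (i : nat) (f : (nat -> R) -> R) : (nat -> R) -> R :=
  fun x => Derive (fun t => f (upd x i t)) (x i).

Definition iter_partial (i k : nat) (f : (nat -> R) -> R) : (nat -> R) -> R :=
  Nat.iter k (partial i) f.

Fixpoint Dmulti (d : nat) (n : nat -> nat) (f : (nat -> R) -> R) : (nat -> R) -> R :=
  match d with
  | O => f
  | S d' => Dmulti d' n (iter_partial d' (n d') f)
  end.

Definition rpow (a b : R) : R := Rpower a b.

(* Rodrigues function P_n^{(gamma, c)}(x), gamma = (gamma_1..gamma_d), gamma_{d+1} = c *)
Definition Rodrigues (d : nat) (gamma : nat -> R) (c : R) (n : nat -> nat)
  (x : nat -> R) : R :=
  prodR d (fun i => rpow (x i) (- gamma i)) * rpow (1 - absx d x) (- c) *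
  Dmulti d n
    (fun y => prodR d (fun i => rpow (y i) (gamma i + INR (n i))) *
              rpow (1 - absx d y) (c + absn d n)) x.

Definition sub_e (n : nat -> nat) (i : nat) : nat -> nat :=
  fun j => if Nat.eqb j i then (n j - 1)%nat else n j.

(* Main.v *)
Require Import Defs.
From Stdlib Require Import Reals Lra Lia FunctionalExtensionality List.
From Coquelicot Require Import Coquelicot.
Open Scope R_scope.

Lemma sumR_ext d f g : (forall i, (i < d)%nat -> f i = g i) -> sumR d f = sumR d g.
Proof. induction d; simpl; intros H; [reflexivity|]. rewrite IHd by (intros; apply H; lia). rewrite H by lia. reflexivity. Qed.
Lemma prodR_ext d f g : (forall i, (i < d)%nat -> f i = g i) -> prodR d f = prodR d g.
Proof. induction d; simpl; intros H; [reflexivity|]. rewrite IHd by (intros; apply H; lia). rewrite H by lia. reflexivity. Qed.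
Lemma sumR_plus d f g : sumR d (fun i => f i + g i) = sumR d f + sumR d g.
Proof. induction d; simpl; [ring|]. rewrite IHd. ring. Qed.
Lemma sumR_scal d c f : sumR d (fun i => c * f i) = c * sumR d f.
Proof. induction d; simpl; [ring|]. rewrite IHd. ring. Qed.
Lemma sumR_opp d f : sumR d (fun i => - f i) = - sumR d f.
Proof. induction d; simpl; [ring|]. rewrite IHd. ring. Qed.
Lemma sumR_upd d f i u : (i < d)%nat ->
  sumR d (fun j => if Nat.eqb j i then u else f j) = sumR d f - f i + u.
Proof.
  induction d; intros H; [lia|]. simpl.
  destruct (Nat.eq_dec i d) as [->|Hne].
  - rewrite Nat.eqb_refl. rewrite (sumR_ext d _ f). ring.
    intros j Hj. destruct (Nat.eqb_spec j d); [lia|reflexivity].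
  - rewrite IHd by lia. destruct (Nat.eqb_spec d i); [lia|]. ring.
Qed.
Lemma prodR_split d f i : (i < d)%nat ->
  prodR d f = f i * prodR d (fun j => if Nat.eqb j i then 1 else f j).
Proof.
  induction d; intros H; [lia|]. simpl.
  destruct (Nat.eq_dec i d) as [->|Hne].
  - rewrite Nat.eqb_refl. rewrite (prodR_ext d (fun j => if Nat.eqb j d then 1 else f j) f). ring.
    intros j Hj. destruct (Nat.eqb_spec j d); [lia|reflexivity].
  - rewrite IHd at 1 by lia. destruct (Nat.eqb_spec d i); [lia|]. ring.
Qed.
Lemma sumR_ge d f j : (forall i, (i < d)%nat -> 0 <= f i) -> (j < d)%nat -> f j <= sumR d f.
Proof.
  induction d; intros H Hj; [lia|]. simpl.
  assert (0 <= sumR d f).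
  { clear IHd Hj. induction d; simpl; [lra|]. assert (0 <= f d) by (apply H; lia).
    assert (0 <= sumR d f) by (apply IHd; intros; apply H; lia). lra. }
  destruct (Nat.eq_dec j d) as [->|]. lra.
  assert (f j <= sumR d f) by (apply IHd; [intros; apply H; lia|lia]).
  assert (0 <= f d) by (apply H; lia). lra.
Qed.

Lemma is_derive_eq (f : R -> R) x l l' : is_derive f x l -> l = l' -> is_derive f x l'.
Proof. intros H ->; exact H. Qed.

Lemma d_rpow x y : 0 < x -> is_derive (fun t => rpow t y) x (y * rpow x (y-1)).
Proof. intros H. apply is_derive_Reals. apply derivable_pt_lim_power. exact H. Qed.

Lemma d_rpowK K b t : 0 < K - t -> is_derive (fun s => rpow (K - s) b) t (- (b * rpow (K-t) (b-1))).
Proof.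
  intros H.
  assert (Hg : is_derive (fun s : R => K - s) t (-1)).
  { eapply is_derive_eq. apply (is_derive_minus (fun _ => K) (fun s => s)).
    apply is_derive_const. apply is_derive_id. simpl. unfold minus, zero, one, plus, opp; simpl. ring. }
  eapply is_derive_eq. apply (is_derive_comp (fun s => rpow s b) (fun s => K - s)).
  apply d_rpow. exact H. exact Hg. unfold scal; simpl. unfold mult; simpl. ring.
Qed.

Lemma d_mono a Q K b t : 0 < t -> 0 < K - t ->
  is_derive (fun s => rpow s a * Q * rpow (K - s) b) t
   (a * rpow t (a-1) * Q * rpow (K-t) b + rpow t a * Q * (- (b * rpow (K-t) (b-1)))).
Proof.
  intros H1 H2.
  eapply is_derive_eq.
  apply (is_derive_mult (fun s => rpow s a * Q) (fun s => rpow (K-s) b)).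
  eapply is_derive_eq. apply (is_derive_mult (fun s => rpow s a) (fun _ => Q)).
  apply d_rpow; exact H1. apply is_derive_const. intros; apply Rmult_comm. reflexivity.
  apply d_rpowK; exact H2. intros; apply Rmult_comm.
  unfold plus, mult, zero; simpl. ring.
Qed.

Definition U dd x := in_simplex_interior dd x.
Definition eqU dd (f g : (nat -> R) -> R) := forall x, U dd x -> f x = g x.
Definition mon dd (a : nat -> R) (b : R) (y : nat -> R) :=
  prodR dd (fun i => rpow (y i) (a i)) * rpow (1 - absx dd y) b.
Definition suba (a : nat -> R) i := fun j => if Nat.eqb j i then a j - 1 else a j.

Lemma U_w dd x : U dd x -> 0 < 1 - absx dd x.
Proof. intros [_ H]. lra. Qed.

Lemma upd_loc dd x i : U dd x -> (i < dd)%nat -> locally (x i) (fun t => U dd (upd x i t)).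
Proof.
  intros [Hp Hs] Hi.
  assert (Hxi : 0 < x i) by (apply Hp; exact Hi).
  assert (He : 0 < Rmin (x i) (1 - absx dd x)) by (apply Rmin_pos; lra).
  exists (mkposreal _ He). intros t Ht. simpl in Ht.
  unfold ball in Ht; simpl in Ht; unfold AbsRing_ball, abs, minus, plus, opp in Ht; simpl in Ht.
  apply Rabs_def2 in Ht. destruct Ht as [Ht1 Ht2].
  assert (Hm1 := Rmin_l (x i) (1 - absx dd x)). assert (Hm2 := Rmin_r (x i) (1 - absx dd x)).
  split.
  - intros j Hj. unfold upd. destruct (Nat.eqb j i). lra. apply Hp; exact Hj.
  - unfold absx, upd. rewrite sumR_upd by exact Hi. unfold absx in *. lra.
Qed.

Lemma partial_resp dd f g i : (i < dd)%nat -> eqU dd f g -> eqU dd (partial i f) (partial i g).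
Proof.
  intros Hi H x Hx. unfold partial. apply Derive_ext_loc.
  generalize (upd_loc dd x i Hx Hi). apply filter_imp. intros t Ht. apply H. exact Ht.
Qed.

Lemma mon_split dd a b y i : (i < dd)%nat ->
  mon dd a b y = rpow (y i) (a i) * prodR dd (fun j => if Nat.eqb j i then 1 else rpow (y j) (a j))
     * rpow (1 - absx dd y) b.
Proof. intros Hi. unfold mon. rewrite (prodR_split dd _ i Hi). reflexivity. Qed.

Lemma d_mon dd a b x i : U dd x -> (i < dd)%nat ->
  is_derive (fun t => mon dd a b (upd x i t)) (x i)
   (a i * mon dd (suba a i) b x - b * mon dd a (b - 1) x).
Proof.
  intros Hx Hi.
  set (Q := prodR dd (fun j => if Nat.eqb j i then 1 else rpow (x j) (a j))).
  set (K := 1 - absx dd x + x i).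
  assert (Hxi : 0 < x i) by (apply (proj1 Hx); exact Hi).
  assert (Hw := U_w dd x Hx).
  eapply is_derive_ext.
  2:{ eapply is_derive_eq. apply (d_mono (a i) Q K b (x i)). exact Hxi. unfold K; lra.
      rewrite (mon_split dd (suba a i) b x i Hi), (mon_split dd a (b-1) x i Hi).
      unfold suba at 1. rewrite Nat.eqb_refl.
      rewrite (prodR_ext dd (fun j => if Nat.eqb j i then 1 else rpow (x j) (suba a i j))
                 (fun j => if Nat.eqb j i then 1 else rpow (x j) (a j))).
      fold Q. replace (K - x i) with (1 - absx dd x) by (unfold K; ring). match goal with |- ?A = ?B => change (@eq R A B) end; ring.
      intros j _. unfold suba. destruct (Nat.eqb j i); reflexivity. }
  intros t. simpl. rewrite (mon_split dd a b (upd x i t) i Hi).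
  unfold upd at 1. rewrite Nat.eqb_refl.
  rewrite (prodR_ext dd (fun j => if Nat.eqb j i then 1 else rpow (upd x i t j) (a j))
             (fun j => if Nat.eqb j i then 1 else rpow (x j) (a j))).
  fold Q. unfold absx, upd. rewrite sumR_upd by exact Hi. unfold K, absx. 
  replace (1 - (sumR dd x - x i + t)) with (1 - sumR dd x + x i - t) by ring. reflexivity.
  intros j _. unfold upd. destruct (Nat.eqb j i); reflexivity.
Qed.

Definition term := (R * (nat -> R) * R)%type.
Fixpoint ev dd (e : list term) (y : nat -> R) : R :=
  match e with nil => 0 | (c, a, b) :: e' => c * mon dd a b y + ev dd e' y end.
Definition dex1 i (t : term) : list term :=
  let '(c, a, b) := t in (c * a i, suba a i, b) :: (- (c * b), a, b - 1) :: nil.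
Fixpoint dex i (e : list term) : list term :=
  match e with nil => nil | t :: e' => dex1 i t ++ dex i e' end.
Definition scl (k : R) (e : list term) : list term := map (fun '(c, a, b) => (k * c, a, b)) e.
Definition mw (e : list term) : list term := map (fun '(c, a, b) => (c, a, b + 1)) e.

Lemma ev_app dd e1 e2 y : ev dd (e1 ++ e2) y = ev dd e1 y + ev dd e2 y.
Proof. induction e1 as [|[[c a] b] e1 IH]; simpl; [ring|]. rewrite IH. ring. Qed.
Lemma ev_scl dd k e y : ev dd (scl k e) y = k * ev dd e y.
Proof. induction e as [|[[c a] b] e IH]; simpl; [ring|]. rewrite IH. ring. Qed.
Lemma dex_app i e1 e2 : dex i (e1 ++ e2) = dex i e1 ++ dex i e2.
Proof. induction e1; simpl; [reflexivity|]. rewrite IHe1, app_assoc. reflexivity. Qed.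
Lemma dex_scl i k e y dd : ev dd (dex i (scl k e)) y = k * ev dd (dex i e) y.
Proof. induction e as [|[[c a] b] e IH]; simpl; [ring|]. rewrite IH. ring. Qed.

Lemma d_ev dd e x i : U dd x -> (i < dd)%nat ->
  is_derive (fun t => ev dd e (upd x i t)) (x i) (ev dd (dex i e) x).
Proof.
  intros Hx Hi. induction e as [|[[c a] b] e IH]; simpl.
  - eapply is_derive_eq. apply is_derive_const. reflexivity.
  - eapply is_derive_eq.
    apply (is_derive_plus (fun t => c * mon dd a b (upd x i t)) (fun t => ev dd e (upd x i t))).
    apply is_derive_scal. apply d_mon; assumption. exact IH.
    unfold plus; simpl. match goal with |- ?A = ?B => change (@eq R A B) end. ring.
Qed.

Lemma partial_ev dd e i : (i < dd)%nat -> eqU dd (partial i (ev dd e)) (ev dd (dex i e)).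
Proof. intros Hi x Hx. unfold partial. apply is_derive_unique. apply d_ev; assumption. Qed.

Lemma eqU_trans dd f g h : eqU dd f g -> eqU dd g h -> eqU dd f h.
Proof. intros H1 H2 x Hx. rewrite H1, H2 by exact Hx. reflexivity. Qed.
Lemma eqU_sym dd f g : eqU dd f g -> eqU dd g f.
Proof. intros H x Hx. rewrite H by exact Hx. reflexivity. Qed.
Lemma eqU_refl dd f : eqU dd f f.
Proof. intros x _; reflexivity. Qed.

Definition good dd f := exists e, eqU dd f (ev dd e).

Lemma good_ev dd e : good dd (ev dd e).
Proof. exists e. apply eqU_refl. Qed.

Lemma good_resp dd f g : eqU dd f g -> good dd g -> good dd f.
Proof. intros H [e He]. exists e. eapply eqU_trans; eassumption. Qed.

Lemma good_partial dd f i : (i < dd)%nat -> good dd f -> good dd (partial i f).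
Proof. intros Hi [e He]. exists (dex i e). eapply eqU_trans. apply partial_resp; eassumption. apply partial_ev; exact Hi. Qed.

Lemma good_lin dd a b f g : good dd f -> good dd g -> good dd (fun y => a * f y + b * g y).
Proof.
  intros [e1 H1] [e2 H2]. exists (scl a e1 ++ scl b e2). intros x Hx.
  rewrite ev_app, !ev_scl, H1, H2 by exact Hx. reflexivity.
Qed.

Lemma partial_lin dd a b f g i : (i < dd)%nat -> good dd f -> good dd g ->
  eqU dd (partial i (fun y => a * f y + b * g y)) (fun y => a * partial i f y + b * partial i g y).
Proof.
  intros Hi [e1 H1] [e2 H2].
  assert (E : eqU dd (fun y => a * f y + b * g y) (ev dd (scl a e1 ++ scl b e2))).
  { intros x Hx. rewrite ev_app, !ev_scl, H1, H2 by exact Hx. reflexivity. }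
  intros x Hx. rewrite (partial_resp dd _ _ i Hi E x Hx), (partial_ev dd _ i Hi x Hx).
  rewrite (partial_resp dd _ _ i Hi H1 x Hx), (partial_ev dd _ i Hi x Hx).
  rewrite (partial_resp dd _ _ i Hi H2 x Hx), (partial_ev dd _ i Hi x Hx).
  rewrite dex_app, ev_app, !dex_scl. reflexivity.
Qed.

Lemma mon_w dd a b x : U dd x -> mon dd a (b + 1) x = (1 - absx dd x) * mon dd a b x.
Proof.
  intros Hx. unfold mon, rpow. rewrite Rpower_plus, Rpower_1 by (apply U_w; exact Hx). ring.
Qed.

Lemma ev_mw dd e x : U dd x -> ev dd (mw e) x = (1 - absx dd x) * ev dd e x.
Proof.
  intros Hx. induction e as [|[[c a] b] e IH]; simpl; [ring|]. rewrite IH, mon_w by exact Hx. ring.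
Qed.

Lemma good_w dd f : good dd f -> good dd (fun y => (1 - absx dd y) * f y).
Proof. intros [e H]. exists (mw e). intros x Hx. rewrite ev_mw, H by exact Hx. reflexivity. Qed.

Lemma dex_mw dd i e x : U dd x ->
  ev dd (dex i (mw e)) x = (1 - absx dd x) * ev dd (dex i e) x - ev dd e x.
Proof.
  intros Hx. induction e as [|[[c a] b] e IH]; simpl; [ring|]. rewrite IH.
  rewrite mon_w by exact Hx. replace (b + 1 - 1) with (b - 1 + 1) by ring.
  rewrite mon_w by exact Hx. replace (mon dd a b x) with (mon dd a (b - 1 + 1) x) by (f_equal; ring). rewrite (mon_w dd a (b-1)) by exact Hx. ring.
Qed.

Lemma partial_w dd f i : (i < dd)%nat -> good dd f ->
  eqU dd (partial i (fun y => (1 - absx dd y) * f y))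
         (fun y => (1 - absx dd y) * partial i f y - f y).
Proof.
  intros Hi [e H].
  assert (E : eqU dd (fun y => (1 - absx dd y) * f y) (ev dd (mw e))).
  { intros x Hx. rewrite ev_mw, H by exact Hx. reflexivity. }
  intros x Hx. rewrite (partial_resp dd _ _ i Hi E x Hx), (partial_ev dd _ i Hi x Hx).
  rewrite (partial_resp dd _ _ i Hi H x Hx), (partial_ev dd _ i Hi x Hx).
  rewrite dex_mw, H by exact Hx. reflexivity.
Qed.

Lemma dex_comm dd i j e y : ev dd (dex i (dex j e)) y = ev dd (dex j (dex i e)) y.
Proof.
  destruct (Nat.eq_dec i j) as [->|Hne]; [reflexivity|].
  induction e as [|[[c a] b] e IH]; simpl; [reflexivity|].
  rewrite IH.
  assert (E1 : suba a j i = a i) by (unfold suba; destruct (Nat.eqb_spec i j); [lia|reflexivity]).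
  assert (E2 : suba a i j = a j) by (unfold suba; destruct (Nat.eqb_spec j i); [lia|reflexivity]).
  assert (E3 : suba (suba a j) i = suba (suba a i) j).
  { apply functional_extensionality; intros k. unfold suba.
    destruct (Nat.eqb_spec k i), (Nat.eqb_spec k j); subst; try lia; reflexivity. }
  rewrite E1, E2, E3. ring.
Qed.

Lemma partial_comm dd f i j : (i < dd)%nat -> (j < dd)%nat -> good dd f ->
  eqU dd (partial i (partial j f)) (partial j (partial i f)).
Proof.
  intros Hi Hj [e H] x Hx.
  rewrite (partial_resp dd _ _ i Hi (eqU_trans dd _ _ _ (partial_resp dd _ _ j Hj H) (partial_ev dd e j Hj)) x Hx).
  rewrite (partial_resp dd _ _ j Hj (eqU_trans dd _ _ _ (partial_resp dd _ _ i Hi H) (partial_ev dd e i Hi)) x Hx).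
  rewrite (partial_ev dd _ i Hi x Hx), (partial_ev dd _ j Hj x Hx). apply dex_comm.
Qed.

Lemma iter_resp dd i k f g : (i < dd)%nat -> eqU dd f g -> eqU dd (iter_partial i k f) (iter_partial i k g).
Proof. intros Hi H. induction k; simpl. exact H. apply partial_resp; assumption. Qed.

Lemma iter_good dd i k f : (i < dd)%nat -> good dd f -> good dd (iter_partial i k f).
Proof. intros Hi H. induction k; simpl. exact H. apply good_partial; assumption. Qed.

Lemma iter_lin dd i k a b f g : (i < dd)%nat -> good dd f -> good dd g ->
  eqU dd (iter_partial i k (fun y => a * f y + b * g y))
         (fun y => a * iter_partial i k f y + b * iter_partial i k g y).
Proof.
  intros Hi Hf Hg. induction k; simpl. apply eqU_refl.
  eapply eqU_trans. apply partial_resp. exact Hi. exact IHk.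
  apply partial_lin; [exact Hi| apply iter_good; assumption | apply iter_good; assumption].
Qed.

Lemma iter_shift {A} k (p : A -> A) f : Nat.iter k p (p f) = p (Nat.iter k p f).
Proof. induction k; simpl. reflexivity. rewrite IHk. reflexivity. Qed.

Lemma iter_w dd i k f : (i < dd)%nat -> good dd f ->
  eqU dd (iter_partial i k (fun y => (1 - absx dd y) * f y))
         (fun y => (1 - absx dd y) * iter_partial i k f y - INR k * iter_partial i (k - 1) f y).
Proof.
  intros Hi Hf. induction k.
  - intros x Hx. simpl. ring.
  - assert (E : eqU dd (fun y => (1 - absx dd y) * iter_partial i k f y - INR k * iter_partial i (k - 1) f y)
                  (fun y => 1 * ((1 - absx dd y) * iter_partial i k f y) + (- INR k) * iter_partial i (k - 1) f y)).
    { intros x _. ring. }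
    change (iter_partial i (S k) ?g) with (partial i (iter_partial i k g)).
    eapply eqU_trans. apply partial_resp. exact Hi. eapply eqU_trans. exact IHk. exact E.
    eapply eqU_trans. apply partial_lin. exact Hi. apply good_w, iter_good; assumption. apply iter_good; assumption.
    intros x Hx. rewrite (partial_w dd _ i Hi (iter_good dd i k f Hi Hf) x Hx).
    replace (S k - 1)%nat with k by lia.
    destruct k.
    + simpl. ring.
    + replace (S k - 1)%nat with k by lia. change (partial i (iter_partial i k f) x) with (iter_partial i (S k) f x).
      rewrite !S_INR. ring.
Qed.

Lemma iter_comm dd i j k f : (i < dd)%nat -> (j < dd)%nat -> good dd f ->
  eqU dd (partial i (iter_partial j k f)) (iter_partial j k (partial i f)).
Proof.
  intros Hi Hj Hf. induction k; simpl. apply eqU_refl.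
  eapply eqU_trans. apply partial_comm; try assumption. apply iter_good; assumption.
  apply partial_resp; assumption.
Qed.

Lemma Dm_S d n f : Dmulti (S d) n f = Dmulti d n (iter_partial d (n d) f).
Proof. reflexivity. Qed.

Lemma Dm_resp dd d n f g : (d <= dd)%nat -> eqU dd f g -> eqU dd (Dmulti d n f) (Dmulti d n g).
Proof.
  revert f g. induction d; intros f g Hd H. exact H.
  rewrite !Dm_S. apply IHd. lia. apply iter_resp. lia. exact H.
Qed.

Lemma Dm_good dd d n f : (d <= dd)%nat -> good dd f -> good dd (Dmulti d n f).
Proof.
  revert f. induction d; intros f Hd H. exact H.
  rewrite Dm_S. apply IHd. lia. apply iter_good. lia. exact H.
Qed.

Lemma Dm_lin dd d n a b f g : (d <= dd)%nat -> good dd f -> good dd g ->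
  eqU dd (Dmulti d n (fun y => a * f y + b * g y))
         (fun y => a * Dmulti d n f y + b * Dmulti d n g y).
Proof.
  revert f g. induction d; intros f g Hd Hf Hg. apply eqU_refl.
  rewrite !Dm_S. eapply eqU_trans. apply Dm_resp. lia. apply iter_lin; [lia|assumption|assumption].
  apply IHd; [lia| apply iter_good; [lia|assumption] | apply iter_good; [lia|assumption]].
Qed.

Lemma Dm_ext_n d n n' f : (forall j, (j < d)%nat -> n j = n' j) -> Dmulti d n f = Dmulti d n' f.
Proof.
  revert f. induction d; intros f H. reflexivity.
  rewrite !Dm_S. rewrite (H d) by lia. apply IHd. intros; apply H; lia.
Qed.

Lemma sub_e_ne n i j : j <> i -> sub_e n i j = n j.
Proof. intros H. unfold sub_e. destruct (Nat.eqb_spec j i); [lia|reflexivity]. Qed.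
Lemma sub_e_eq n i : sub_e n i i = (n i - 1)%nat.
Proof. unfold sub_e. rewrite Nat.eqb_refl. reflexivity. Qed.

Lemma Dm_w dd d n f : (d <= dd)%nat -> good dd f ->
  eqU dd (Dmulti d n (fun y => (1 - absx dd y) * f y))
    (fun y => (1 - absx dd y) * Dmulti d n f y - sumR d (fun j => INR (n j) * Dmulti d (sub_e n j) f y)).
Proof.
  revert f. induction d; intros f Hd Hf.
  - intros x _. simpl. ring.
  - rewrite Dm_S. set (k := n d).
    set (A := iter_partial d k f). set (B := iter_partial d (k - 1) f).
    assert (GA : good dd A) by (apply iter_good; [lia|exact Hf]).
    assert (GB : good dd B) by (apply iter_good; [lia|exact Hf]).
    eapply eqU_trans. apply Dm_resp. lia.
    eapply eqU_trans. apply iter_w. lia. exact Hf.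
    instantiate (1 := fun y => 1 * ((1 - absx dd y) * A y) + (- INR k) * B y).
    intros x _. unfold A, B. ring.
    eapply eqU_trans. apply Dm_lin. lia. apply good_w; exact GA. exact GB.
    intros x Hx. rewrite (IHd A) by (lia || assumption).
    change (sumR (S d) ?g) with (sumR d g + g d); cbv beta. rewrite (sumR_ext d (fun j => INR (n j) * Dmulti (S d) (sub_e n j) f x)
                          (fun j => INR (n j) * Dmulti d (sub_e n j) A x)).
    rewrite (Dm_S d (sub_e n d) f), (Dm_S d n f), sub_e_eq. fold k. rewrite (Dm_ext_n d (sub_e n d) n).
    fold A B. ring.
    intros j Hj. apply sub_e_ne. lia.
    intros j Hj. rewrite Dm_S. rewrite sub_e_ne by lia. reflexivity.
Qed.

Lemma Dm_comm dd d n f i : (d <= dd)%nat -> (i < d)%nat -> (1 <= n i)%nat -> good dd f ->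
  eqU dd (Dmulti d n f) (Dmulti d (sub_e n i) (partial i f)).
Proof.
  revert f. induction d; intros f Hd Hi Hn Hf. lia.
  rewrite !Dm_S. destruct (Nat.eq_dec i d) as [->|Hne].
  - rewrite sub_e_eq. unfold iter_partial. rewrite iter_shift. change (partial d (Nat.iter ?k (partial d) f)) with (Nat.iter (S k) (partial d) f).
    replace (S (n d - 1)) with (n d) by lia.
    rewrite (Dm_ext_n d (sub_e n d) n). apply eqU_refl.
    intros j Hj. apply sub_e_ne. lia.
  - rewrite sub_e_ne by lia.
    eapply eqU_trans. apply IHd; try lia. apply iter_good; [lia|exact Hf].
    apply Dm_resp. lia. apply iter_comm; try lia. exact Hf.
Qed.

Lemma mon_ext dd a a' b b' y : (forall j, (j < dd)%nat -> a j = a' j) -> b = b' -> mon dd a b y = mon dd a' b' y.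
Proof. intros H <-. unfold mon. rewrite (prodR_ext dd _ (fun i => rpow (y i) (a' i))). reflexivity.
  intros j Hj. rewrite H by exact Hj. reflexivity. Qed.

Lemma good_mon dd a b : good dd (mon dd a b).
Proof. exists ((1, a, b) :: nil). intros x _. simpl. ring. Qed.

Lemma partial_mon dd a b i : (i < dd)%nat ->
  eqU dd (partial i (mon dd a b)) (fun y => a i * mon dd (suba a i) b y + (- b) * mon dd a (b - 1) y).
Proof.
  intros Hi. eapply eqU_trans. apply partial_resp. exact Hi.
  instantiate (1 := ev dd ((1, a, b) :: nil)). intros x _; simpl; ring.
  eapply eqU_trans. apply partial_ev. exact Hi. intros x _. simpl. ring.
Qed.

Lemma absn_sub d n i : (i < d)%nat -> (1 <= n i)%nat -> absn d (sub_e n i) = absn d n - 1.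
Proof.
  intros Hi Hn. unfold absn.
  rewrite (sumR_ext d (fun j => INR (sub_e n i j)) (fun j => if Nat.eqb j i then INR (n i) - 1 else INR (n j))).
  rewrite sumR_upd by exact Hi. ring.
  intros j _. unfold sub_e. destruct (Nat.eqb_spec j i). subst. rewrite minus_INR by exact Hn. simpl. ring. reflexivity.
Qed.

Lemma key d gamma n x : (1 <= d)%nat -> (forall i, (i < d)%nat -> (1 <= n i)%nat) -> U d x ->
  (1 - absx d x) * Dmulti d n (mon d (fun j => gamma j + INR (n j)) (-1 + absn d n)) x =
  sumR d (fun i => INR (n i) * (gamma i + INR (n i)) / absn d n *
     Dmulti d (sub_e n i) (mon d (fun j => gamma j + INR (sub_e n i j)) (1 + absn d (sub_e n i))) x).
Proof.
  intros Hd Hn Hx.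
  set (m := absn d n). set (aN := fun j => gamma j + INR (n j)).
  set (F := mon d aN (-1 + m)). set (H := mon d aN m).
  set (G := fun i => mon d (fun j => gamma j + INR (sub_e n i j)) (1 + absn d (sub_e n i))).
  change (fun i => INR (n i) * (gamma i + INR (n i)) / m * Dmulti d (sub_e n i) (mon d (fun j => gamma j + INR (sub_e n i j)) (1 + absn d (sub_e n i))) x)
    with (fun i => INR (n i) * (gamma i + INR (n i)) / m * Dmulti d (sub_e n i) (G i) x).
  assert (Hm : 0 < m).
  { assert (1 <= INR (n 0%nat)) by (apply (le_INR 1); apply Hn; lia).
    assert (INR (n 0%nat) <= m). { unfold m, absn. apply (sumR_ge d (fun i => INR (n i))). intros; apply pos_INR. lia. }
    lra. }
  assert (GF : good d F) by apply good_mon.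
  assert (GH : good d H) by apply good_mon.
  assert (L := Dm_w d d n F (le_n d) GF x Hx).
  assert (HwF : eqU d (fun y => (1 - absx d y) * F y) H).
  { intros y Hy. unfold F, H. rewrite <- mon_w by exact Hy. apply mon_ext. reflexivity. ring. }
  rewrite (Dm_resp d d n _ _ (le_n d) HwF x Hx) in L.
  assert (Step : forall i, (i < d)%nat ->
     Dmulti d n H x = (gamma i + INR (n i)) * Dmulti d (sub_e n i) (G i) x + (- m) * Dmulti d (sub_e n i) F x).
  { intros i Hi. rewrite (Dm_comm d d n H i (le_n d) Hi (Hn i Hi) GH x Hx).
    assert (PH : eqU d (partial i H) (fun y => (gamma i + INR (n i)) * G i y + (- m) * F y)).
    { eapply eqU_trans. apply partial_mon. exact Hi. intros y _. unfold G, F. 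
      rewrite (mon_ext d (suba aN i) (fun j => gamma j + INR (sub_e n i j)) m (1 + absn d (sub_e n i))).
      replace (m - 1) with (-1 + m) by ring. unfold aN. reflexivity.
      intros j Hj. unfold suba, aN, sub_e. destruct (Nat.eqb_spec j i). subst. rewrite minus_INR by (apply Hn; exact Hj). simpl. ring. reflexivity.
      rewrite absn_sub by (exact Hi || apply Hn; exact Hi). fold m. ring. }
    rewrite (Dm_resp d d _ _ _ (le_n d) PH x Hx).
    apply (Dm_lin d d (sub_e n i) _ _ (G i) F (le_n d)). apply good_mon. exact GF. exact Hx. }
  assert (Hsum : Dmulti d n H x = sumR d (fun i => INR (n i) / m * Dmulti d n H x)).
  { rewrite (sumR_ext d _ (fun i => / m * Dmulti d n H x * INR (n i))).
    rewrite (sumR_scal d (/ m * Dmulti d n H x)). fold (absn d n). fold m. field. lra.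
    intros; unfold Rdiv; ring. }
  rewrite (sumR_ext d (fun i => INR (n i) / m * Dmulti d n H x)
     (fun i => INR (n i) * (gamma i + INR (n i)) / m * Dmulti d (sub_e n i) (G i) x + (- 1) * (INR (n i) * Dmulti d (sub_e n i) F x))) in Hsum.
  rewrite sumR_plus, sumR_scal in Hsum. fold F. lra.
  intros i Hi. rewrite (Step i Hi). field. lra.
Qed.

Theorem lemma4p1 (d : nat) (gamma : nat -> R) (n : nat -> nat) (x : nat -> R) :
  (1 <= d)%nat ->
  (forall i, (i < d)%nat -> (1 <= n i)%nat) ->
  in_simplex_interior d x ->
  Rodrigues d gamma (-1) n x =
  (1 - absx d x) *
  sumR d (fun i => INR (n i) * (gamma i + INR (n i)) / absn d n *
                   Rodrigues d gamma 1 (sub_e n i) x).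
Proof.
  intros Hd Hn Hx.
  assert (K := key d gamma n x Hd Hn Hx).
  assert (Hw := U_w d x Hx).
  unfold mon in K. cbv beta in K.
  unfold Rodrigues.
  set (P := prodR d (fun i => rpow (x i) (- gamma i))).
  match goal with |- _ = _ * sumR d ?f => rewrite (sumR_ext d f (fun i => (P * rpow (1 - absx d x) (- (1))) *
     (INR (n i) * (gamma i + INR (n i)) / absn d n *
      Dmulti d (sub_e n i)
        (fun y => prodR d (fun i0 => rpow (y i0) (gamma i0 + INR (sub_e n i i0))) *
                  rpow (1 - absx d y) (1 + absn d (sub_e n i))) x))) end.
  2:{ intros. ring. }
  rewrite sumR_scal, <- K.
  unfold rpow. replace (- -1) with 1 by ring. rewrite Rpower_1 by exact Hw.
  rewrite Rpower_Ropp, Rpower_1 by exact Hw. field. lra.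
Qed.
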